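(* Let $(X,d)$ be an Atsuji space and $f:X\to X$ a closed mapping. If there exists $x_0\in X$ such that $\liminf_{n\to\infty} d(f^n(x_0),f^{n+1}(x_0))=0$, then $f$ has a fixed point.
   Context: A metric space $(X,d)$ is an Atsuji space if for each open cover $\mathcal{U}$ of $X$ there exists $\varepsilon>0$ such that for every $x\in X$ the open ball $B_d(x,\varepsilon)$ is contained in some element of $\mathcal{U}$. A mapping is closed if it maps closed sets to closed sets (continuity is not assumed). $f^n$ denotes the $n$-fold iterate of $f$. *)

(* Defs.v *)
From Stdlib Require Import Reals.
From Coquelicot Require Import Coquelicot.
Open Scope R_scope.

Section MetricDefs.
Variable M : Metric_Space.
Local Notation X := (Base M).
Local Notation d := (dist M).

Definition open_ball (x : X) (eps : R) : X -> Prop := fun y => d x y < eps.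

Definition m_open (U : X -> Prop) : Prop :=
  forall x, U x -> exists eps, eps > 0 /\ forall y, open_ball x eps y -> U y.

Definition m_closed (F : X -> Prop) : Prop := m_open (fun x => ~ F x).

Definition open_cover (C : (X -> Prop) -> Prop) : Prop :=
  (forall U, C U -> m_open U) /\ (forall x, exists U, C U /\ U x).

Definition Atsuji : Prop :=
  forall C : (X -> Prop) -> Prop, open_cover C ->
    exists eps, eps > 0 /\
      forall x, exists U, C U /\ forall y, open_ball x eps y -> U y.

Definition image (f : X -> X) (F : X -> Prop) : X -> Prop :=
  fun y => exists x, F x /\ f x = y.

(* closed mapping (continuity not assumed) *)
Definition closed_map (f : X -> X) : Prop :=
  forall F, m_closed F -> m_closed (image f F).
End MetricDefs.

(* Main.v *)
Require Import Defs.
From Stdlib Require Import Reals.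
From Coquelicot Require Import Coquelicot.
From Stdlib Require Import Classical ClassicalEpsilon Lia Lra.
Open Scope R_scope.

Lemma finite_sep (M : Metric_Space) (a : nat -> Base M) (y : Base M) (N : nat) :
  exists d, d > 0 /\ forall k, (k < N)%nat -> a k <> y -> d <= dist M y (a k).
Proof.
  induction N as [|N [d [Hd IH]]].
  - exists 1; split; [lra|]; intros; lia.
  - destruct (classic (a N = y)) as [E|E].
    + exists d; split; auto; intros k Hk Hne.
      destruct (Nat.eq_dec k N) as [->|]; [contradiction|]. apply IH; auto; lia.
    + assert (Hp : dist M y (a N) > 0).
      { destruct (dist_pos M y (a N)) as [|H0]; auto.
        apply (dist_refl M) in H0; congruence. }
      exists (Rmin d (dist M y (a N))); split.
      { apply Rmin_glb_lt; auto. }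
      intros k Hk Hne.
      destruct (Nat.eq_dec k N) as [->|]; [apply Rmin_r|].
      eapply Rle_trans; [apply Rmin_l|]. apply IH; auto; lia.
Qed.

Lemma finite_pos (u : nat -> R) (N : nat) : (forall i, u i > 0) ->
  exists e, e > 0 /\ forall i, (i < N)%nat -> e <= u i.
Proof.
  intros Hu; induction N as [|N [e [He IH]]].
  - exists 1; split; [lra|]; intros; lia.
  - exists (Rmin e (u N)); split.
    { apply Rmin_glb_lt; auto. apply Hu. }
    intros i Hi. destruct (Nat.eq_dec i N) as [->|]; [apply Rmin_r|].
    eapply Rle_trans; [apply Rmin_l|]. apply IH; lia.
Qed.

Lemma ball_open (M : Metric_Space) p r : m_open M (open_ball M p r).
Proof.
  intros y Hy. unfold open_ball in *. exists (r - dist M p y); split; [lra|].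
  intros z Hz. unfold open_ball in Hz. pose proof (dist_tri M p z y). lra.
Qed.

Lemma dist_self (M : Metric_Space) (y : Base M) : dist M y y = 0.
Proof. apply (dist_refl M). reflexivity. Qed.

Lemma dist_pos_ne (M : Metric_Space) (y z : Base M) : y <> z -> dist M y z > 0.
Proof.
  intros H. destruct (dist_pos M y z) as [|H0]; auto.
  apply (dist_refl M) in H0; congruence.
Qed.

Theorem corollary7 (M : Metric_Space) (f : Base M -> Base M) :
  Atsuji M -> closed_map M f ->
  (exists x0 : Base M,
      LimInf_seq (fun n => dist M (Nat.iter n f x0) (Nat.iter (S n) f x0))
      = Finite 0) ->
  exists x : Base M, f x = x.
Proof.
  intros HA Hcl [x0 Hlim].
  set (x := fun n => Nat.iter n f x0).
  assert (HxS : forall n, x (S n) = f (x n)) by reflexivity.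
  destruct (classic (exists z, f z = z)) as [|Hnf]; [assumption|exfalso].
  assert (Hsmall : forall eps, eps > 0 -> exists n, dist M (x n) (x (S n)) < eps).
  { intros eps Heps.
    destruct (ex_LimInf_seq (fun n => dist M (Nat.iter n f x0) (Nat.iter (S n) f x0)))
      as [l Hl].
    pose proof (is_LimInf_seq_unique _ _ Hl) as E. rewrite Hlim in E. subst l.
    destruct (Hl (mkposreal eps Heps)) as [H1 _].
    destruct (H1 O) as [n [_ Hn]]. exists n. cbn [pos] in Hn. unfold x. lra. }
  assert (Hpos : forall n, dist M (x n) (x (S n)) > 0).
  { intros n. apply dist_pos_ne. rewrite HxS. intros E. apply Hnf. eauto. }
  assert (Hinj : forall a b, (a < b)%nat -> x a <> x b).
  { intros a b Hab E.
    assert (Hj : forall j, x (a + j)%nat = x (b + j)%nat).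
    { induction j. now rewrite !Nat.add_0_r.
      rewrite !Nat.add_succ_r, !HxS, IHj. reflexivity. }
    assert (Hper : forall n, exists i, (i < b)%nat /\ x n = x i).
    { intros n. induction n as [n IH] using (well_founded_induction Wf_nat.lt_wf).
      destruct (Nat.lt_ge_cases n b) as [Hn|Hn].
      - exists n; auto.
      - destruct (IH (a + (n - b))%nat) as [i [Hi Ei]]; [lia|].
        exists i; split; auto. rewrite <- Ei, Hj. f_equal. lia. }
    destruct (finite_pos (fun i => dist M (x i) (x (S i))) b Hpos) as [e [He Hi]].
    destruct (Hsmall e He) as [n Hn].
    destruct (Hper n) as [i [Hib Ei]].
    rewrite HxS, Ei, <- HxS in Hn. specialize (Hi i Hib). cbv beta in Hi. lra. }
  assert (Hclu : exists p, forall r, r > 0 -> forall N, exists n, (N <= n)%nat /\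
             dist M p (x n) < r /\ dist M p (x (S n)) < r).
  { apply NNPP; intro Hno.
    assert (Hgood : forall p, exists r, r > 0 /\ forall n,
               dist M p (x n) < r -> dist M p (x (S n)) < r -> False).
    { intro p.
      destruct (classic (exists r N, r > 0 /\ forall n, (N <= n)%nat ->
                 dist M p (x n) < r -> dist M p (x (S n)) < r -> False))
        as [[r0 [N [Hr0 HN]]] | H].
      - destruct (finite_sep M x p N) as [d [Hd Hsep]].
        assert (Hs : dist M p (f p) > 0).
        { apply dist_pos_ne. intros E. apply Hnf. eauto. }
        exists (Rmin r0 (Rmin d (dist M p (f p)))). split.
        { apply Rmin_glb_lt; auto. apply Rmin_glb_lt; auto. }
        intros n H1 H2.
        pose proof (Rmin_l r0 (Rmin d (dist M p (f p)))).
        pose proof (Rmin_r r0 (Rmin d (dist M p (f p)))).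
        pose proof (Rmin_l d (dist M p (f p))).
        pose proof (Rmin_r d (dist M p (f p))).
        destruct (Nat.le_gt_cases N n) as [Hn|Hn].
        + apply (HN n Hn); lra.
        + destruct (classic (x n = p)) as [E|E].
          * rewrite HxS, E in H2. lra.
          * specialize (Hsep n Hn E). lra.
      - exfalso; apply Hno; exists p; intros r Hr N.
        apply NNPP; intro Hn. apply H; exists r, N; split; auto.
        intros n Hn' H1 H2. apply Hn; exists n; auto. }
    set (C := fun U : Base M -> Prop => exists p r, r > 0 /\
          (forall n, dist M p (x n) < r -> dist M p (x (S n)) < r -> False) /\
          U = open_ball M p r).
    assert (Hcov : open_cover M C).
    { split.
      - intros U [p [r [_ [_ ->]]]]. apply ball_open.
      - intros y. destruct (Hgood y) as [r [Hr Hg]].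
        exists (open_ball M y r). split.
        + exists y, r; auto.
        + unfold open_ball. rewrite dist_self. lra. }
    destruct (HA C Hcov) as [eps [Heps HL]].
    destruct (Hsmall eps Heps) as [n Hn].
    destruct (HL (x n)) as [U [[p [r [Hr [Hg ->]]]] Hsub]].
    apply (Hg n).
    - apply Hsub. unfold open_ball. rewrite dist_self. lra.
    - apply Hsub. unfold open_ball. exact Hn. }
  destruct Hclu as [p Hp].
  assert (Hphi : forall k, exists n, (k <= n)%nat /\ dist M p (x n) < / INR (S k)
                   /\ dist M p (x (S n)) < / INR (S k)).
  { intros k. apply Hp. apply Rinv_0_lt_compat. apply lt_0_INR. lia. }
  set (phi := fun k => proj1_sig (constructive_indefinite_description _ (Hphi k))).
  assert (Hphik : forall k, (k <= phi k)%nat /\ dist M p (x (phi k)) < / INR (S k)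
                   /\ dist M p (x (S (phi k))) < / INR (S k)).
  { intros k. unfold phi. destruct (constructive_indefinite_description _ (Hphi k)); auto. }
  assert (Hinv : forall k K, (0 < K)%nat -> (K <= k)%nat -> / INR (S k) <= / INR K).
  { intros k K HK HkK. apply Rinv_le_contravar. apply lt_0_INR; auto.
    apply le_INR. lia. }
  set (F := fun y => y = p \/ exists k, y = x (phi k) /\ x (S (phi k)) <> p).
  assert (HF : m_closed M F).
  { intros y Hy.
    assert (Hyp : y <> p) by (intro E; apply Hy; left; auto).
    assert (Hd : dist M p y > 0) by (apply dist_pos_ne; auto).
    destruct (archimed_cor1 (dist M p y / 2)) as [K [HK HK0]]; [lra|].
    destruct (finite_sep M (fun k => x (phi k)) y K) as [d' [Hd' Hsep]].
    exists (Rmin (dist M p y / 2) d'). split; [apply Rmin_glb_lt; lra|].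
    intros z Hz [Ez | [k [Ez Hk]]].
    - subst z. unfold open_ball in Hz. rewrite dist_sym in Hz.
      pose proof (Rmin_l (dist M p y / 2) d'). lra.
    - unfold open_ball in Hz.
      pose proof (Rmin_l (dist M p y / 2) d'). pose proof (Rmin_r (dist M p y / 2) d').
      destruct (Nat.le_gt_cases K k) as [Hkk|Hkk].
      + destruct (Hphik k) as [_ [H1 _]]. pose proof (Hinv k K HK0 Hkk).
        pose proof (dist_tri M p y z). rewrite (dist_sym M z y) in *. subst z. lra.
      + assert (Hne : x (phi k) <> y).
        { intro E. apply Hy. right. exists k. auto. }
        specialize (Hsep k Hkk Hne). subst z. simpl in Hsep. lra. }
  specialize (Hcl F HF).
  assert (Himg : image M f F p).
  { apply NNPP; intro Hn. destruct (Hcl p Hn) as [eps [Heps Hb]].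
    destruct (archimed_cor1 eps Heps) as [K [HK HK0]].
    assert (Hk : exists k, (K <= k)%nat /\ x (S (phi k)) <> p).
    { destruct (classic (x (S (phi K)) = p)) as [E|E].
      - exists (S (phi K)). destruct (Hphik (S (phi K))) as [H1 _]. destruct (Hphik K) as [H0 _]. split; [lia|].
        intro E2. rewrite <- E in E2. apply (Hinj (S (phi K)) (S (phi (S (phi K))))).
        lia. auto.
      - exists K; split; auto. }
    destruct Hk as [k [Hk Hne]].
    apply (Hb (x (S (phi k)))).
    - unfold open_ball. destruct (Hphik k) as [_ [_ H2]].
      pose proof (Hinv k K HK0 Hk). lra.
    - exists (x (phi k)). split; [right; exists k; auto|]. reflexivity. }
  destruct Himg as [z [[Ez | [k [Ez Hk]]] Hfz]].
  - subst z. apply Hnf. eauto.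
  - apply Hk. rewrite HxS, <- Ez. exact Hfz.
Qed.
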